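(* Let $S_0$ be a nonempty set, let $S$ be the collection of all finite subsets of $S_0$, partially ordered by set inclusion, and let $\mathcal{G}$ be any group acting on $S_0$, with the action extended to $S$ by $Ta = \{Tx : x \in a\}$ for $a \in S$, $T \in \mathcal{G}$. Then on the quotient $S/\mathcal{G}$ (the set of orbits of this action) the strong relation ($A \preceq B$ iff for all $a \in A$ there is $b \in B$ with $a \subseteq b$) and the weak relation ($A \preceq B$ iff there exist $a \in A$, $b \in B$ with $a \subseteq b$) are identical, and this relation is a partial order on $S/\mathcal{G}$. *)

(* Defs.v *)
From Stdlib Require Import List.

Record group_action (S0 : Type) := GroupAction {
  grp : Type;
  gmul : grp -> grp -> grp;
  gone : grp;
  ginv : grp -> grp;
  gmul_assoc : forall a b c, gmul a (gmul b c) = gmul (gmul a b) c;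
  gmul_1l : forall a, gmul gone a = a;
  gmul_Vl : forall a, gmul (ginv a) a = gone;
  act : grp -> S0 -> S0;
  act_one : forall x, act gone x = x;
  act_mul : forall g h x, act (gmul g h) x = act g (act h x)
}.
Arguments grp {S0}.
Arguments act {S0} _ _ _.

Definition subset_of {S0 : Type} (a b : S0 -> Prop) : Prop :=
  forall x, a x -> b x.

Definition finite_subset {S0 : Type} (a : S0 -> Prop) : Prop :=
  exists l : list S0, forall x, a x <-> In x l.

Definition act_set {S0 : Type} (Gs : group_action S0) (T : grp Gs)
  (a : S0 -> Prop) : S0 -> Prop :=
  fun y => exists x, a x /\ y = act Gs T x.

Definition orbit {S0 : Type} (Gs : group_action S0) (a : S0 -> Prop)
  : (S0 -> Prop) -> Prop :=
  fun b => exists T : grp Gs, b = act_set Gs T a.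

(* The quotient S/G: orbits of finite subsets. *)
Definition orbits {S0 : Type} (Gs : group_action S0) : Type :=
  { O : (S0 -> Prop) -> Prop | exists a, finite_subset a /\ O = orbit Gs a }.

Definition strong_rel {S0 : Type} {Gs : group_action S0} (A B : orbits Gs) : Prop :=
  forall a, proj1_sig A a -> exists b, proj1_sig B b /\ subset_of a b.

Definition weak_rel {S0 : Type} {Gs : group_action S0} (A B : orbits Gs) : Prop :=
  exists a b, proj1_sig A a /\ proj1_sig B b /\ subset_of a b.

Definition is_partial_order {X : Type} (R : X -> X -> Prop) : Prop :=
  (forall x, R x x) /\
  (forall x y z, R x y -> R y z -> R x z) /\
  (forall x y, R x y -> R y x -> x = y).

(* Main.v *)
Require Import Defs.
From Stdlib Require Import List FinFun ClassicalDescription FunctionalExtensionality PropExtensionality ProofIrrelevance.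

Lemma set_ext {S0 : Type} (a b : S0 -> Prop) : (forall x, a x <-> b x) -> a = b.
Proof. intro H. apply functional_extensionality; intro x. apply propositional_extensionality; auto. Qed.

Section G.
Variable S0 : Type.
Variable Gs : group_action S0.

Lemma gmul_Vr (a : grp Gs) : gmul S0 Gs a (ginv S0 Gs a) = gone S0 Gs.
Proof.
  pose proof (gmul_Vl S0 Gs (ginv S0 Gs a)) as H1.
  pose proof (gmul_Vl S0 Gs a) as H2.
  transitivity (gmul S0 Gs (gmul S0 Gs (ginv S0 Gs (ginv S0 Gs a)) (ginv S0 Gs a)) (gmul S0 Gs a (ginv S0 Gs a))).
  { rewrite H1, gmul_1l; reflexivity. }
  rewrite <- gmul_assoc, (gmul_assoc S0 Gs (ginv S0 Gs a) a).
  rewrite H2, gmul_1l. exact H1.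
Qed.

Lemma act_inv_l T x : act Gs (ginv S0 Gs T) (act Gs T x) = x.
Proof. rewrite <- act_mul, gmul_Vl. apply act_one. Qed.
Lemma act_inv_r T x : act Gs T (act Gs (ginv S0 Gs T) x) = x.
Proof. rewrite <- act_mul, gmul_Vr. apply act_one. Qed.

Lemma act_set_comp g h a : act_set Gs (gmul S0 Gs g h) a = act_set Gs g (act_set Gs h a).
Proof.
  apply set_ext; intro y; unfold act_set; split.
  - intros [x [Hx ->]]. exists (act Gs h x). split; [exists x; auto | apply act_mul].
  - intros [z [[x [Hx ->]] ->]]. exists x. split; auto. symmetry; apply act_mul.
Qed.

Lemma act_set_one a : act_set Gs (gone S0 Gs) a = a.
Proof.
  apply set_ext; intro y; unfold act_set; split.
  - intros [x [Hx ->]]. rewrite act_one; auto.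
  - intros Hy. exists y. rewrite act_one; auto.
Qed.

Lemma act_set_inv T a : act_set Gs (ginv S0 Gs T) (act_set Gs T a) = a.
Proof. rewrite <- act_set_comp, gmul_Vl. apply act_set_one. Qed.

Lemma act_set_sub T a b : subset_of a b -> subset_of (act_set Gs T a) (act_set Gs T b).
Proof. intros H y [x [Hx ->]]. exists x; auto. Qed.

Lemma orbit_shift S b : orbit Gs (act_set Gs S b) = orbit Gs b.
Proof.
  apply set_ext; intro c; unfold orbit; split.
  - intros [T ->]. exists (gmul S0 Gs T S). symmetry; apply act_set_comp.
  - intros [T ->]. exists (gmul S0 Gs T (ginv S0 Gs S)).
    rewrite act_set_comp, act_set_inv. reflexivity.
Qed.

Lemma pigeon (a : S0 -> Prop) (h : S0 -> S0) : finite_subset a -> Injective h ->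
  (forall x, a x -> a (h x)) -> forall y, a y -> exists x, a x /\ y = h x.
Proof.
  intros [l Hl] Hinj Hmap y Hy.
  assert (dec : forall x y : S0, {x = y} + {x <> y}) by (intros; apply excluded_middle_informative).
  set (l0 := nodup dec l).
  assert (Hl0 : forall x, a x <-> In x l0) by (intro x; unfold l0; rewrite nodup_In; auto).
  assert (Hinc : incl l0 (map h l0)).
  { apply NoDup_length_incl.
    - apply Injective_map_NoDup; auto. apply NoDup_nodup.
    - rewrite length_map; auto.
    - intros z Hz. apply in_map_iff in Hz. destruct Hz as [x [<- Hx]].
      apply Hl0, Hmap, Hl0; auto. }
  apply Hl0, Hinc, in_map_iff in Hy. destruct Hy as [x [<- Hx]].
  exists x; split; auto. apply Hl0; auto.
Qed.

End G.

Theorem corollary1 (S0 : Type) (hne : inhabited S0) (Gs : group_action S0) :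
  (forall A B : orbits Gs, strong_rel A B <-> weak_rel A B) /\
  is_partial_order (@strong_rel S0 Gs).
Proof.
  split; [|split; [|split]].
  - intros [OA [a0 [fa0 ->]]] [OB [b0 [fb0 ->]]]. unfold strong_rel, weak_rel; simpl. split.
    + intros H. destruct (H a0) as [b [Hb Hs]].
      { exists (gone S0 Gs). symmetry; apply act_set_one. }
      exists a0, b; split; [exists (gone S0 Gs); symmetry; apply act_set_one | auto].
    + intros [a [b [[T ->] [[S ->] Hs]]]] a' [T' ->].
      set (U := gmul S0 Gs T' (ginv S0 Gs T)).
      exists (act_set Gs U (act_set Gs S b0)). split.
      * exists (gmul S0 Gs U S). symmetry; apply act_set_comp.
      * assert (E : act_set Gs T' a0 = act_set Gs U (act_set Gs T a0)).
        { unfold U. rewrite act_set_comp, act_set_inv. reflexivity. }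
        rewrite E. apply act_set_sub; auto.
  - intros A a Ha. exists a; split; auto. intros x; auto.
  - intros A B C H1 H2 a Ha. destruct (H1 a Ha) as [b [Hb Hab]].
    destruct (H2 b Hb) as [c [Hc Hbc]]. exists c; split; auto. intros x Hx; auto.
  - intros [OA [a0 [fa0 EA]]] [OB [b0 [fb0 EB]]] H1 H2.
    unfold strong_rel in *; simpl in *.
    assert (Ha0 : OA a0) by (subst; exists (gone S0 Gs); symmetry; apply act_set_one).
    destruct (H1 a0 Ha0) as [b [Hb Hab]].
    destruct (H2 b Hb) as [a [Ha Hba]].
    rewrite EA in Ha. destruct Ha as [T ->].
    rewrite EB in Hb. destruct Hb as [S ->].
    assert (Hsub : subset_of a0 (act_set Gs T a0)) by (intros x Hx; auto).
    assert (Hsup : subset_of (act_set Gs T a0) a0).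
    { intros y [x [Hx ->]].
      assert (Hin : Injective (act Gs (ginv S0 Gs T))).
      { intros u v E. rewrite <- (act_inv_r S0 Gs T u), <- (act_inv_r S0 Gs T v), E. reflexivity. }
      assert (Hmap : forall z, a0 z -> a0 (act Gs (ginv S0 Gs T) z)).
      { intros z Hz. destruct (Hsub z Hz) as [w [Hw Ew]]. rewrite Ew, act_inv_l. auto. }
      destruct (pigeon S0 a0 _ fa0 Hin Hmap x Hx) as [w [Hw Ew]].
      rewrite Ew, act_inv_r. auto. }
    assert (Eb : act_set Gs S b0 = a0).
    { apply set_ext; intro x; split; intro Hx; auto. }
    assert (EO : OA = OB).
    { rewrite EA, EB, <- Eb. apply orbit_shift. }
    apply eq_exist_uncurried. exists EO. apply proof_irrelevance.
Qed.
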